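(* Let $A=\begin{bmatrix}T_{SS}&T_{SR}\\ 0&T_{RR}\end{bmatrix}\in\mathbb{R}^{N\times N}$ be a combination matrix of the weakly-connected form described in the context. Then $I-T_{RR}$ is invertible and the limit $\lim_{n\to\infty}A^n$ exists and equals $$A_\infty=\begin{bmatrix}\Theta & \Theta W\\ 0 & 0\end{bmatrix},\qquad W=T_{SR}(I-T_{RR})^{-1},\qquad \Theta=\mathrm{blockdiag}\{p_1\mathbb{1}_{N_1}^{\mathsf T},\dots,p_S\mathbb{1}_{N_S}^{\mathsf T}\},$$ where $p_s$ is the Perron vector of $A_s$ and $\mathbb{1}_{N_s}$ is the all-ones vector of length $N_s$.
   Context: $N$ agents are partitioned into sub-networks $1,\dots,S+R$ ($S\ge 1$), sub-network $j$ having $N_j$ agents; agents are numbered so that those of sub-networks $1,\dots,S$ (group $S$, $N_{gS}=N_1+\cdots+N_S$ agents) come first, followed by those of sub-networks $S+1,\dots,S+R$ (group $R$, $N_{gR}=N_{S+1}+\cdots+N_{S+R}$ agents). The combination matrix $A=[a_{\ell k}]$ has nonnegative entries, is left-stochastic ($\sum_{\ell}a_{\ell k}=1$ for every $k$, i.e. $A^{\mathsf T}\mathbb{1}=\mathbb{1}$), and has the block form $A=\begin{bmatrix}T_{SS}&T_{SR}\\0&T_{RR}\end{bmatrix}$ with $T_{SS}\in\mathbb{R}^{N_{gS}\times N_{gS}}$, $T_{RR}\in\mathbb{R}^{N_{gR}\times N_{gR}}$. Here $T_{SS}=\mathrm{blockdiag}\{A_1,\dots,A_S\}$ where each $A_s\in\mathbb{R}^{N_s\times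 N_s}$ is left-stochastic and primitive (sub-network $s$ is strongly connected). $T_{RR}$ is block upper triangular with diagonal blocks $A_{S+1},\dots,A_{S+R}$, where $A_r\in\mathbb{R}^{N_r\times N_r}$ contains the weights on edges internal to sub-network $r$; each sub-network $r$ of group $R$ is connected (so $A_r$ is a nonnegative irreducible matrix) and receives information from agents outside it, so that at least one column of $A_r$ sums to a number strictly smaller than one. For $s=1,\dots,S$, the Perron vector $p_s$ of $A_s$ is the unique vector with $A_sp_s=p_s$, $\mathbb{1}^{\mathsf T}p_s=1$, and all entries positive. *)

(* Defs.v *)
From HB Require Import structures.
From mathcomp Require Import all_boot all_order all_algebra.
From mathcomp Require Import all_classical all_reals all_analysis.
Set Implicit Arguments. Unset Strict Implicit. Unset Printing Implicit Defensive.
Import Order.TTheory GRing.Theory Num.Theory.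
Import numFieldNormedType.Exports.
Local Open Scope ring_scope.

Definition primitive_mx (R : realType) (n : nat) (M : 'M[R]_n) : Prop :=
  (forall i j, 0 <= M i j) /\ exists m : nat, forall i j, 0 < (M ^+ m.+1) i j.

Definition irreducible_mx (R : realType) (n : nat) (M : 'M[R]_n) : Prop :=
  (forall i j, 0 <= M i j) /\ forall i j, exists m : nat, 0 < (M ^+ m) i j.

Definition perron_vector (R : realType) (n : nat) (M : 'M[R]_n) (p : 'cV[R]_n)
  : Prop :=
  M *m p = p /\ \sum_(i < n) p i 0 = 1 /\ forall i, 0 < p i 0.

(* Main.v *)
Require Import Defs.
From HB Require Import structures.
From mathcomp Require Import all_boot all_order all_algebra.
From mathcomp Require Import all_classical all_reals all_analysis.
From mathcomp Require Import ring lra zify.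
Import Order.TTheory GRing.Theory Num.Theory.
Import numFieldNormedType.Exports.
Local Open Scope classical_set_scope.
Local Open Scope ring_scope.
Section Gen.
Set Implicit Arguments. Unset Strict Implicit.
Variable R : realType.

Definition zseq {m n} (u : nat -> 'M[R]_(m,n)) :=
  forall e : R, 0 < e -> exists N, forall k, (N <= k)%N -> forall i j, `|u k i j| <= e.

Definition bnd {m n} (u : nat -> 'M[R]_(m,n)) :=
  exists K : R, 0 <= K /\ forall k i j, `|u k i j| <= K.

Lemma zseq_cvg m n (u : nat -> 'M[R]_(m,n)) L :
  zseq (fun k => u k - L) -> u @ \oo --> L.
Proof.
move=> z; apply/cvgrPdist_le => e e0.
have [N HN] := z e e0.
exists N => // k /= Nk.
rewrite [leLHS]/Num.Def.normr/= mx_normrE (bigmax_le _ (ltW e0))//= => -[i j] _ /=.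
by rewrite -normrN !mxE opprB; have := HN k Nk i j; rewrite !mxE.
Qed.

Lemma zseq_ext m n (u v : nat -> 'M[R]_(m,n)) :
  (forall k, u k = v k) -> zseq u -> zseq v.
Proof. by move=> E z e e0; have [N HN] := z e e0; exists N => k Nk i j; rewrite -E; apply: HN. Qed.

Lemma zseq0 m n : zseq (fun _ => (0 : 'M[R]_(m,n))).
Proof. by move=> e e0; exists 0%N => k _ i j; rewrite mxE normr0 ltW. Qed.

Lemma zseqD m n (u v : nat -> 'M[R]_(m,n)) :
  zseq u -> zseq v -> zseq (fun k => u k + v k).
Proof.
move=> zu zv e e0.
have e20 : 0 < e / 2 by rewrite divr_gt0.
have [N1 H1] := zu _ e20; have [N2 H2] := zv _ e20.
exists (maxn N1 N2) => k Nk i j; rewrite mxE.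
rewrite (le_trans (ler_normD _ _)) // [e](splitr e) lerD //.
  by apply: H1; apply: leq_trans Nk; apply: leq_maxl.
by apply: H2; apply: leq_trans Nk; apply: leq_maxr.
Qed.

Lemma zseqN m n (u : nat -> 'M[R]_(m,n)) : zseq u -> zseq (fun k => - u k).
Proof. by move=> z e e0; have [N HN] := z e e0; exists N => k Nk i j; rewrite mxE normrN HN. Qed.

Lemma zseqB m n (u v : nat -> 'M[R]_(m,n)) :
  zseq u -> zseq v -> zseq (fun k => u k - v k).
Proof. by move=> zu zv; apply: zseqD => //; apply: zseqN. Qed.

Lemma le_sum1 (I : finType) (F : I -> R) i : (forall j, 0 <= F j) -> F i <= \sum_j F j.
Proof. by move=> F0; rewrite (bigD1 i) //= lerDl sumr_ge0. Qed.

Lemma bnd_cst m n (M : 'M[R]_(m,n)) : bnd (fun _ => M).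
Proof.
exists (\sum_i \sum_j `|M i j|); split; first by apply: sumr_ge0 => i0 _; apply: sumr_ge0.
move=> _ i j; apply: (le_trans (@le_sum1 _ (fun j => `|M i j|) j _)) => //.
by apply: (@le_sum1 _ (fun i => \sum_j `|M i j|) i) => i'; apply: sumr_ge0.
Qed.

Lemma mul_bound_aux (m : nat) (K e : R) : 0 <= K -> 0 < e ->
  m%:R * (K * (e / (m%:R * K + 1))) <= e.
Proof.
move=> K0 e0.
have d0 : 0 < m%:R * K + 1 by rewrite ltr_wpDl // mulr_ge0.
rewrite mulrA mulrCA; apply: ler_piMr; first exact: ltW.
by rewrite ler_pdivrMr // mul1r lerDl.
Qed.

Lemma zseq_mull p m n (B : nat -> 'M[R]_(p,m)) (u : nat -> 'M[R]_(m,n)) :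
  bnd B -> zseq u -> zseq (fun k => B k *m u k).
Proof.
move=> [K [K0 HK]] z e e0.
have d0 : 0 < m%:R * K + 1 by rewrite ltr_wpDl // mulr_ge0.
have e'0 : 0 < e / (m%:R * K + 1) by rewrite divr_gt0.
have [N HN] := z _ e'0; exists N => k Nk i j; rewrite mxE.
apply: le_trans (ler_norm_sum _ _ _) _.
apply: (le_trans _ (mul_bound_aux m K0 e0)).
have -> : m%:R * (K * (e / (m%:R * K + 1))) = \sum_(l < m) K * (e / (m%:R * K + 1)).
  by rewrite sumr_const card_ord mulr_natl.
rewrite ler_sum // => l _; rewrite normrM.
by rewrite ler_pM ?normr_ge0 ?HK ?HN.
Qed.

Lemma zseq_mulr p m n (u : nat -> 'M[R]_(p,m)) (B : nat -> 'M[R]_(m,n)) :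
  bnd B -> zseq u -> zseq (fun k => u k *m B k).
Proof.
move=> [K [K0 HK]] z e e0.
have d0 : 0 < m%:R * K + 1 by rewrite ltr_wpDl // mulr_ge0.
have e'0 : 0 < e / (m%:R * K + 1) by rewrite divr_gt0.
have [N HN] := z _ e'0; exists N => k Nk i j; rewrite mxE.
apply: le_trans (ler_norm_sum _ _ _) _.
apply: (le_trans _ (mul_bound_aux m K0 e0)).
have -> : m%:R * (K * (e / (m%:R * K + 1))) = \sum_(l < m) K * (e / (m%:R * K + 1)).
  by rewrite sumr_const card_ord mulr_natl.
rewrite ler_sum // => l _; rewrite normrM mulrC.
by rewrite ler_pM ?normr_ge0 ?HK ?HN.
Qed.

Lemma zseq_comp m n (u : nat -> 'M[R]_(m,n)) (phi : nat -> nat) :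
  (forall N, exists M, forall k, (M <= k)%N -> (N <= phi k)%N) ->
  zseq u -> zseq (fun k => u (phi k)).
Proof.
move=> hphi z e e0; have [N HN] := z e e0; have [M HM] := hphi N.
by exists M => k Mk i j; apply: HN; apply: HM.
Qed.

Lemma zseq_block m1 m2 n1 n2 (u1 : nat -> 'M[R]_(m1,n1)) (u2 : nat -> 'M[R]_(m1,n2))
  (u3 : nat -> 'M[R]_(m2,n1)) (u4 : nat -> 'M[R]_(m2,n2)) :
  zseq u1 -> zseq u2 -> zseq u3 -> zseq u4 ->
  zseq (fun k => block_mx (u1 k) (u2 k) (u3 k) (u4 k)).
Proof.
move=> z1 z2 z3 z4 e e0.
have [N1 H1] := z1 e e0; have [N2 H2] := z2 e e0.
have [N3 H3] := z3 e e0; have [N4 H4] := z4 e e0.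
exists (maxn (maxn N1 N2) (maxn N3 N4)) => k Nk i j.
move: Nk; rewrite !geq_max => /andP[/andP[h1 h2] /andP[h3 h4]].
rewrite -(splitK i) -(splitK j).
case: (fintype.split i) => a; case: (fintype.split j) => b /=.
- by rewrite block_mxEul; apply: H1.
- by rewrite block_mxEur; apply: H2.
- by rewrite block_mxEdl; apply: H3.
- by rewrite block_mxEdr; apply: H4.
Qed.

Lemma fin_N (I : finType) (P : I -> nat -> Prop) :
  (forall i N N', (N <= N')%N -> P i N -> P i N') ->
  (forall i, exists N, P i N) -> exists N, forall i, P i N.
Proof.
move=> mono H; have [f Hf] := choice H.
exists (\max_(i : I) f i)%N => i; apply: (mono i (f i)) => //.
exact: leq_bigmax.
Qed.


Definition vn {n} (x : 'cV[R]_n) := \sum_i `|x i 0|.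
Definition nonneg {m n} (M : 'M[R]_(m,n)) := forall i j, 0 <= M i j.

Lemma vn_ge0 n (x : 'cV[R]_n) : 0 <= vn x.
Proof. by apply: sumr_ge0 => i _. Qed.

Lemma vn_entry n (x : 'cV[R]_n) i : `|x i 0| <= vn x.
Proof. by apply: (@le_sum1 _ (fun i => `|x i 0|)). Qed.

Lemma vn_mul m n (M : 'M[R]_(m,n)) (x : 'cV[R]_n) g :
  nonneg M -> (forall j, \sum_i M i j <= g) -> vn (M *m x) <= g * vn x.
Proof.
move=> M0 Mg; rewrite /vn.
apply: (le_trans (y := \sum_i \sum_j M i j * `|x j 0|)).
  apply: ler_sum => i _; rewrite mxE; apply: le_trans (ler_norm_sum _ _ _) _.
  by apply: ler_sum => j _; rewrite normrM (ger0_norm (M0 i j)).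
rewrite exchange_big mulr_sumr; apply: ler_sum => j _.
by rewrite -mulr_suml ler_wpM2r.
Qed.

Lemma vn_sum n (M : 'M[R]_n) (x : 'cV[R]_n) :
  (forall j, \sum_i M i j = 1) -> \sum_i (M *m x) i 0 = \sum_j x j 0.
Proof.
move=> M1; under eq_bigr do rewrite mxE.
rewrite exchange_big; apply: eq_bigr => j _.
by rewrite -mulr_suml M1 mul1r.
Qed.

Lemma vn_dob n (M : 'M[R]_n) (x : 'cV[R]_n) d :
  (forall i j, d <= M i j) -> (forall j, \sum_i M i j = 1) -> \sum_i x i 0 = 0 ->
  vn (M *m x) <= (1 - n%:R * d) * vn x.
Proof.
move=> dM M1 x0.
have -> : M *m x = (M - const_mx d) *m x.
  rewrite mulmxBl; have -> : (const_mx d : 'M[R]_n) *m x = 0; last by rewrite subr0.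
  apply/matrixP => i j; rewrite !mxE; under eq_bigr do rewrite mxE.
  by rewrite -mulr_sumr ord1 x0 mulr0.
apply: vn_mul => [i j|j]; first by rewrite !mxE subr_ge0.
under eq_bigr do rewrite !mxE.
by rewrite sumrB M1 sumr_const card_ord mulr_natl.
Qed.

Lemma decay (a : nat -> R) m c : (0 < m)%N -> 0 <= c -> c < 1 ->
  (forall k, 0 <= a k) -> (forall k, a k.+1 <= a k) ->
  (forall k, a (k + m)%N <= c * a k) ->
  forall e, 0 < e -> exists N, forall k, (N <= k)%N -> a k <= e.
Proof.
move=> m0 c0 c1 a0 amon ac e e0.
have mono : forall i j, (i <= j)%N -> a j <= a i.
  move=> i j ij; rewrite -(subnK ij); elim: (j - i)%N => [|d IH] /=.
    by rewrite add0n.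
  by rewrite addSn; apply: le_trans (amon _) IH.
have geo : forall q, a (q * m)%N <= c ^+ q * a 0%N.
  elim=> [|q IH]; first by rewrite mul0n expr0 mul1r.
  rewrite mulSn addnC; apply: le_trans (ac _) _.
  by rewrite exprS -mulrA ler_wpM2l.
have ep0 : 0 < e / (a 0%N + 1) by rewrite divr_gt0 // ltr_wpDl.
have : (fun n => c ^+ n) @ \oo --> 0.
  by apply: cvg_expr; rewrite ger0_norm.
move/cvgrPdist_le => /(_ _ ep0) [q0 _ Hq0].
have Hq : c ^+ q0 * a 0%N <= e.
  have := Hq0 q0 (leqnn q0); rewrite /= sub0r normrN ger0_norm ?exprn_ge0 // => h.
  apply: le_trans (ler_wpM2r (a0 _) h) _.
  rewrite mulrAC ler_pdivrMr ?ltr_wpDl // ler_pM2l //.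
  by rewrite lerDl.
exists (q0 * m)%N => k Nk.
apply: le_trans (mono _ _ (leq_divM k m)) _.
apply: le_trans (geo _) _; apply: le_trans Hq.
apply: ler_wpM2r => //; apply: ler_wiXn2l => //; first exact: ltW.
by rewrite leq_divRL.
Qed.

Lemma fin_pos (I : finType) (f : I -> R) : (forall i, 0 < f i) ->
  exists2 d, 0 < d & forall i, d <= f i.
Proof.
move=> fp; exists (\big[Order.min/1]_i f i).
  by apply: (big_ind (fun x => 0 < x)) => // x y x0 y0; rewrite lt_min x0 y0.
by move=> i; apply/bigmin_leP; right; exists i.
Qed.

Lemma fin_lt1 (I : finType) (f : I -> R) : (forall i, f i < 1) ->
  exists r, [/\ 0 <= r, r < 1 & forall i, f i <= r].
Proof.
move=> fp; exists (\big[Order.max/0]_i f i); split.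
- by apply/bigmax_geP; left.
- by apply: (big_ind (fun x => x < 1)) => // x y x0 y0; rewrite gt_max x0 y0.
- by move=> i; apply/bigmax_geP; right; exists i.
Qed.

Lemma nonneg_mul m n p (A : 'M[R]_(m,n)) (B : 'M[R]_(n,p)) :
  nonneg A -> nonneg B -> nonneg (A *m B).
Proof. by move=> A0 B0 i j; rewrite mxE sumr_ge0 // => l _; rewrite mulr_ge0. Qed.

Lemma colsum_mul m n p (A : 'M[R]_(m,n)) (B : 'M[R]_(n,p)) j :
  \sum_i (A *m B) i j = \sum_l (\sum_i A i l) * B l j.
Proof.
under eq_bigr do rewrite mxE.
by rewrite exchange_big; apply: eq_bigr => l _; rewrite mulr_suml.
Qed.

Lemma nonneg1 n : nonneg (1%:M : 'M[R]_n).
Proof. by move=> i j; rewrite mxE ler0n. Qed.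

Lemma colsum1 n (j : 'I_n) : \sum_i (1%:M : 'M[R]_n) i j = 1.
Proof.
rewrite (bigD1 j) //= big1 ?addr0; first by rewrite mxE eqxx.
by move=> i /negbTE ij; rewrite mxE ij.
Qed.

Lemma nonneg_exp n (M : 'M[R]_n) k : nonneg M -> nonneg (M ^+ k).
Proof.
move=> M0; elim: k => [|k IH]; first by rewrite expr0; apply: nonneg1.
by rewrite exprS -mulmxE; apply: nonneg_mul.
Qed.

Lemma colsum_exp1 n (M : 'M[R]_n) k : nonneg M -> (forall j, \sum_i M i j = 1) ->
  forall j, \sum_i (M ^+ k) i j = 1.
Proof.
move=> M0 M1; elim: k => [|k IH] j; first by rewrite expr0 colsum1.
rewrite exprS -mulmxE colsum_mul -(IH j); apply: eq_bigr => l _.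
by rewrite M1 mul1r.
Qed.

Lemma colsum_mul_le m n p (A : 'M[R]_(m,n)) (B : 'M[R]_(n,p)) j :
  nonneg A -> nonneg B -> (forall l, \sum_i A i l <= 1) ->
  \sum_i (A *m B) i j <= \sum_l B l j.
Proof.
move=> A0 B0 A1; rewrite colsum_mul; apply: ler_sum => l _.
by rewrite ler_piMl.
Qed.

Lemma colsum_exp_le n (M : 'M[R]_n) k : nonneg M -> (forall j, \sum_i M i j <= 1) ->
  forall j, \sum_i (M ^+ k) i j <= 1.
Proof.
move=> M0 M1; elim: k => [|k IH] j; first by rewrite expr0 colsum1.
rewrite exprS -mulmxE; apply: le_trans (IH j); apply: colsum_mul_le => //.
exact: nonneg_exp.
Qed.


Lemma col_entry m n p (B : 'M[R]_(m,n)) (A : 'M[R]_(n,p)) i j :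
  (B *m \col_l A l j) i 0 = (B *m A) i j.
Proof. by rewrite !mxE; apply: eq_bigr => l _; rewrite mxE. Qed.

Lemma perron_zseq n (M : 'M[R]_n) (p : 'cV[R]_n) :
  (forall j, \sum_i M i j = 1) -> primitive_mx M -> perron_vector M p ->
  zseq (fun k => M ^+ k - p *m const_mx 1).
Proof.
move=> M1 [M0 [m Mpos]] [Mp [p1 ppos]].
set P := p *m const_mx 1.
have n0 : (0 < n)%N by case: n M p p1 {M1 M0 Mpos Mp ppos P} => // M p; rewrite big_ord0 => /eqP; rewrite eq_sym oner_eq0.
have [d d0 dle] := fin_pos (fun ij : 'I_n * 'I_n => Mpos ij.1 ij.2).
set c := 1 - n%:R * d.
have nd0 : 0 < n%:R * d by apply: mulr_gt0; rewrite ?ltr0n.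
have c1 : c < 1 by rewrite /c; lra.
have c0 : 0 <= c.
  rewrite /c subr_ge0 -[X in _ <= X](colsum_exp1 m.+1 M0 M1 (Ordinal n0)).
  have -> : n%:R * d = \sum_(i < n) d by rewrite sumr_const card_ord mulr_natl.
  apply: ler_sum => i _.
  exact: (dle (i, Ordinal n0)).
have MkP : forall k, M ^+ k *m P = P.
  elim=> [|k IH]; first by rewrite expr0 mul1mx.
  by rewrite exprSr -mulmxE -mulmxA [M *m P]mulmxA Mp.
have E : forall k, M ^+ k - P = M ^+ k *m (1%:M - P).
  by move=> k; rewrite mulmxBr mulmx1 MkP.
set x := fun j => \col_l (1%:M - P) l j.
have sx : forall j, \sum_i x j i 0 = 0.
  move=> j; under eq_bigr do rewrite /x !mxE.
  rewrite sumrB; under [X in _ - X]eq_bigr do rewrite big_ord1 mxE mulr1.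
  have p1' : \sum_i p i ord0 = 1.
    by rewrite -p1; apply: eq_bigr => i _; congr (p i _); apply: val_inj.
  rewrite p1'; apply/eqP; rewrite subr_eq0 -[X in _ == X](colsum1 j); apply/eqP.
  by apply: eq_bigr => i _; rewrite mxE.
have dec : forall j e, 0 < e -> exists N, forall k, (N <= k)%N ->
    vn (M ^+ k *m x j) <= e.
  move=> j; apply: (decay (m := m.+1) (c := c)) => // [k|k|k].
  - exact: vn_ge0.
  - rewrite exprS -mulmxE -mulmxA; apply: le_trans (vn_mul _ _ _) _.
    + exact: M0.
    + by move=> l; rewrite M1.
    + by rewrite mul1r.
  - rewrite addnC exprD -mulmxE -mulmxA; apply: vn_dob.
    + by move=> i l; apply: (dle (i, l)).
    + exact: colsum_exp1.
    + by rewrite vn_sum ?sx //; apply: colsum_exp1.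
move=> e e0.
have [N HN] := fin_N (P := fun j N => forall k, (N <= k)%N -> vn (M ^+ k *m x j) <= e)
  (fun j N N' NN' H k kN => H k (leq_trans NN' kN)) (fun j => dec j e e0).
exists N => k Nk i j; rewrite E -col_entry.
apply: le_trans (vn_entry _ _) _; exact: HN.
Qed.

Lemma sub_zseq n (M : 'M[R]_n) : nonneg M -> (forall j, \sum_i M i j <= 1) ->
  (exists N, forall j, \sum_i (M ^+ N.+1) i j < 1) -> zseq (fun k => M ^+ k).
Proof.
move=> M0 M1 [N HN].
have [r [r0 r1 rle]] := fin_lt1 HN.
set x := fun j => \col_l (1%:M : 'M[R]_n) l j.
have dec : forall j e, 0 < e -> exists K, forall k, (K <= k)%N ->
    vn (M ^+ k *m x j) <= e.
  move=> j; apply: (decay (m := N.+1) (c := r)) => // [k|k|k].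
  - exact: vn_ge0.
  - rewrite exprS -mulmxE -mulmxA; apply: le_trans (vn_mul _ _ _) _.
    + exact: M0.
    + exact: M1.
    + by rewrite mul1r.
  - rewrite addnC exprD -mulmxE -mulmxA; apply: vn_mul => //.
    exact: nonneg_exp.
move=> e e0.
have [K HK] := fin_N (P := fun j N => forall k, (N <= k)%N -> vn (M ^+ k *m x j) <= e)
  (fun j N N' NN' H k kN => H k (leq_trans NN' kN)) (fun j => dec j e e0).
exists K => k Nk i j; rewrite -[M ^+ k]mulmx1 -col_entry.
apply: le_trans (vn_entry _ _) _; exact: HK.
Qed.

Lemma sub_unit n (M : 'M[R]_n) : nonneg M -> (forall j, \sum_i M i j <= 1) ->
  (exists N, forall j, \sum_i (M ^+ N.+1) i j < 1) -> (1%:M - M) \in unitmx.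
Proof.
move=> M0 M1 [N HN].
have [r [r0 r1 rle]] := fin_lt1 HN.
rewrite unitmxE unitfE; apply/negP => /det0P [v v0 vM].
have vMk : forall k, v *m M ^+ k = v.
  elim=> [|k IH]; first by rewrite expr0 mulmx1.
  move: vM; rewrite mulmxBr mulmx1 => /eqP; rewrite subr_eq0 => /eqP vM.
  by rewrite exprS -mulmxE mulmxA -vM.
set mu := \big[Order.max/0]_i `|v 0 i|.
have vmu : forall i, `|v 0 i| <= mu by move=> i; apply/bigmax_geP; right; exists i.
have mu0 : 0 <= mu by apply/bigmax_geP; left.
have vr : forall j, `|v 0 j| <= mu * r.
  move=> j; rewrite -(vMk N.+1) mxE; apply: le_trans (ler_norm_sum _ _ _) _.
  apply: (le_trans (y := \sum_i mu * (M ^+ N.+1) i j)).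
    apply: ler_sum => i _; rewrite normrM (ger0_norm (nonneg_exp _ M0 _ _)).
    by rewrite ler_wpM2r // nonneg_exp.
  by rewrite -mulr_sumr ler_wpM2l.
have mur : mu <= mu * r by apply: bigmax_le => //; rewrite mulr_ge0.
have mu_eq : mu = 0 by nra.
move/negP: v0; apply; apply/eqP/matrixP => i j; rewrite ord1 mxE.
by apply/eqP; rewrite -normr_eq0 eq_le normr_ge0 andbT -mu_eq vmu.
Qed.

Lemma reach_trans n (M : 'M[R]_n) a b j l l' : nonneg M ->
  0 < (M ^+ a) l j -> 0 < (M ^+ b) l' l -> 0 < (M ^+ (b + a)) l' j.
Proof.
move=> M0 h1 h2; rewrite exprD -mulmxE mxE (bigD1 l) //=.
rewrite ltr_wpDr ?mulr_gt0 //; apply: sumr_ge0 => i _.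
by rewrite mulr_ge0 // nonneg_exp.
Qed.

Lemma leak n (M : 'M[R]_n) : nonneg M -> (forall j, \sum_i M i j <= 1) ->
  (forall j, exists m l, 0 < (M ^+ m) l j /\ \sum_i M i l < 1) ->
  exists N, forall j, \sum_i (M ^+ N.+1) i j < 1.
Proof.
move=> M0 M1 H.
have H' : forall j, exists m, forall m', (m <= m')%N -> \sum_i (M ^+ m'.+1) i j < 1.
  move=> j; have [m [l [ml lt1]]] := H j; exists m => m' mm'.
  have -> : m'.+1 = ((m' - m) + m.+1)%N by rewrite addnS subnK.
  rewrite exprD -mulmxE; apply: le_lt_trans (colsum_mul_le _ _ _ _) _.
  - exact: nonneg_exp.
  - exact: nonneg_exp.
  - by move=> l'; apply: colsum_exp_le.
  rewrite exprS -mulmxE colsum_mul.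
  apply: (lt_le_trans (y := \sum_l' (M ^+ m) l' j)); last exact: colsum_exp_le.
  rewrite [X in _ < X](bigD1 l) //= [X in X < _](bigD1 l) //=.
  apply: ltr_leD; first by rewrite -[X in _ < X]mul1r ltr_pM2r.
  apply: ler_sum => i _; apply: ler_piMl; first exact: nonneg_exp.
  exact: M1.
have [N HN] := fin_N (P := fun j m => forall m', (m <= m')%N -> \sum_i (M ^+ m'.+1) i j < 1)
  (fun j N N' NN' h k kN => h k (leq_trans NN' kN)) H'.
by exists N => j; apply: HN.
Qed.

End Gen.
Section Blk.
Set Implicit Arguments. Unset Strict Implicit.
Variable R : realType.
Variables (nb : nat) (p_ : 'I_nb -> nat).

Lemma mxblock_RankE q (q_ : 'I_q -> nat) (B : forall i j, 'M[R]_(p_ i, q_ j)) i j k l :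
  (\mxblock_(i, j) B i j) (tagnat.Rank i k) (tagnat.Rank j l) = B i j k l.
Proof. by have := congr1 (fun M : 'M[R]_(p_ i, q_ j) => M k l) (mxblockK B i j); rewrite /= mxE. Qed.

Lemma sum_Rank (F : 'I_(\sum_i p_ i) -> R) :
  \sum_t F t = \sum_i \sum_(k : 'I_(p_ i)) F (tagnat.Rank i k).
Proof.
rewrite (reindex (@tagnat.rank _ p_)); last exact: tagnat.rank_bij_on.
rewrite sig_big_dep /=.
by apply: eq_bigr => -[i k] _; rewrite tagnat.rankE.
Qed.

Lemma mxdiag_RankE (B : forall i, 'M[R]_(p_ i)) i k l :
  (\mxdiag_i B i) (tagnat.Rank i k) (tagnat.Rank i l) = B i k l.
Proof. by rewrite /mxdiag mxblock_RankE eqxx conform_mx_id. Qed.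

Lemma mxdiag_Rank0 (B : forall i, 'M[R]_(p_ i)) i j k l : i != j ->
  (\mxdiag_i B i) (tagnat.Rank i k) (tagnat.Rank j l) = 0.
Proof. by move=> /negbTE ij; rewrite /mxdiag mxblock_RankE ij mxE. Qed.

Lemma mul_mxdiag (B C : forall i, 'M[R]_(p_ i)) :
  \mxdiag_i B i *m \mxdiag_i C i = \mxdiag_i (B i *m C i).
Proof.
rewrite {2}/mxdiag mul_mxdiag_mxblock /mxdiag; apply: eq_mxblock => i j.
case: (eqVneq i j) => [<-|ij]; first by rewrite !conform_mx_id.
by rewrite mulmx0.
Qed.

Lemma exp_mxdiag (B : forall i, 'M[R]_(p_ i)) k :
  (\mxdiag_i B i) ^+ k = \mxdiag_i (B i ^+ k).
Proof.
elim: k => [|k IH].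
  rewrite expr0; transitivity (\mxdiag_i ((1:R)%:M : 'M[R]_(p_ i))); first by rewrite mxdiagZ.
  by apply: eq_mxdiag => i; rewrite expr0.
by rewrite exprS IH -mulmxE mul_mxdiag; apply: eq_mxdiag => i; rewrite exprS mulmxE.
Qed.

Lemma Rank_ind (P : 'I_(\sum_i p_ i) -> 'I_(\sum_i p_ i) -> Prop) :
  (forall i j (k : 'I_(p_ i)) (l : 'I_(p_ j)), P (tagnat.Rank i k) (tagnat.Rank j l)) ->
  forall s t, P s t.
Proof. by move=> H s t; rewrite -(tagnat.sig2K s) -(tagnat.sig2K t). Qed.

Lemma zseq_mxdiag (u : nat -> forall i, 'M[R]_(p_ i)) :
  (forall i, zseq (fun k => u k i)) -> zseq (fun k => \mxdiag_i u k i).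
Proof.
move=> z e e0.
have [N HN] := fin_N (P := fun i N => forall k, (N <= k)%N -> forall a b, `|u k i a b| <= e)
  (fun i N N' NN' H k kN => H k (leq_trans NN' kN)) (fun i => z i e e0).
exists N => k Nk; apply: Rank_ind => i j a b.
case: (eqVneq i j) => [ij|ij]; last by rewrite mxdiag_Rank0 // normr0 ltW.
by subst j; rewrite mxdiag_RankE; apply: HN.
Qed.

End Blk.
Section Aux.
Set Implicit Arguments. Unset Strict Implicit.
Variable R : realType.

Lemma pos_sum_exists (I : finType) (P : pred I) (F : I -> R) :
  0 < \sum_(i | P i) F i -> exists2 i, P i & 0 < F i.
Proof.
move=> h; case: (boolP [exists i, P i && (0 < F i)]) => [/existsP [i /andP [Pi Fi]]|/existsPn H].
  by exists i.
have : \sum_(i | P i) F i <= 0.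
  apply: sumr_le0 => i Pi; have := H i; rewrite Pi /=.
  by rewrite real_leNgt // realE ?lexx // ; case: (real_ltgtP (num_real (F i)) (num_real 0)) => //; rewrite ?orbT // => ->.
by rewrite leNgt h.
Qed.

Lemma half_le k : (k./2 + k./2 <= k)%N.
Proof. by rewrite addnn halfK leq_subr. Qed.

Lemma sumexp_mul n (M : 'M[R]_n) k :
  (\sum_(i < k) M ^+ i) *m (1%:M - M) = 1%:M - M ^+ k.
Proof.
elim: k => [|k IH]; first by rewrite big_ord0 mul0mx expr0 subrr.
rewrite big_ord_recr /= mulmxDl IH mulmxBr mulmx1 exprSr -mulmxE.
by rewrite addrA subrK.
Qed.

End Aux.
Theorem lemma1 (R : realType) (S Rn : nat) (hS : (0 < S)%N)
  (NS : 'I_S -> nat) (NR : 'I_Rn -> nat)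
  (As : forall s : 'I_S, 'M[R]_(NS s))
  (TSR : 'M[R]_(\sum_(s < S) NS s, \sum_(r < Rn) NR r))
  (BR : forall r1 r2 : 'I_Rn, 'M[R]_(NR r1, NR r2))
  (p : forall s : 'I_S, 'cV[R]_(NS s)) :
  let TSS := \mxdiag_(s < S) As s in
  let TRR := \mxblock_(r1 < Rn, r2 < Rn) BR r1 r2 in
  let A := block_mx TSS TSR 0 TRR in
  (* T_RR is block upper triangular *)
  (forall r1 r2 : 'I_Rn, (r2 < r1)%N -> BR r1 r2 = 0) ->
  (* A has nonnegative entries and is left-stochastic *)
  (forall l k, 0 <= A l k) ->
  (forall k, \sum_l A l k = 1) ->
  (* each A_s is primitive, with Perron vector p_s *)
  (forall s, primitive_mx (As s)) ->
  (forall s, perron_vector (As s) (p s)) ->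
  (* each A_r is irreducible and has a column summing to less than one *)
  (forall r, irreducible_mx (BR r r)) ->
  (forall r, exists k, \sum_i BR r r i k < 1) ->
  let W := TSR *m invmx (1%:M - TRR) in
  let Theta := \mxdiag_(s < S) (p s *m const_mx 1) in
  (1%:M - TRR) \in unitmx /\
  (fun n : nat => A ^+ n) @ \oo --> block_mx Theta (Theta *m W) 0 0.
Proof.
move=> TSS TRR A Htri A0 A1 Aprim Aperr Birr Bleak W Theta.
have TSS0 : nonneg TSS by move=> i j; have := A0 (lshift _ i) (lshift _ j); rewrite /A block_mxEul.
have TSR0 : nonneg TSR by move=> i j; have := A0 (lshift _ i) (rshift _ j); rewrite /A block_mxEur.
have TRR0 : nonneg TRR by move=> i j; have := A0 (rshift _ i) (rshift _ j); rewrite /A block_mxEdr.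
have colTSS : forall j, \sum_i TSS i j = 1.
  move=> j; have := A1 (lshift _ j); rewrite big_split_ord /=.
  under eq_bigr do rewrite /A block_mxEul.
  under [X in _ + X]eq_bigr do rewrite /A block_mxEdl mxE.
  by rewrite sumr_const mul0rn addr0.
have colTRR : forall j, \sum_i TRR i j <= 1.
  move=> j; have := A1 (rshift _ j); rewrite big_split_ord /=.
  under eq_bigr do rewrite /A block_mxEur.
  under [X in _ + X]eq_bigr do rewrite /A block_mxEdr.
  move=> <-; rewrite lerDr; apply: sumr_ge0 => i _; exact: TSR0.
have colAs : forall s j, \sum_i As s i j = 1.
  move=> s j; have := colTSS (tagnat.Rank s j); rewrite sum_Rank (bigD1 s) //=.
  rewrite [X in _ + X]big1 ?addr0 => [h|s' s's].
    by rewrite -h; apply: eq_bigr => k _; rewrite /TSS mxdiag_RankE.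
  by apply: big1 => k _; rewrite /TSS mxdiag_Rank0.
have zTSS : zseq (fun k => TSS ^+ k - Theta).
  apply: (zseq_ext (u := fun k => \mxdiag_s (As s ^+ k - p s *m const_mx 1))).
    by move=> k; rewrite /TSS /Theta exp_mxdiag mxdiagB.
  apply: zseq_mxdiag => s; apply: perron_zseq => //; exact: colAs.
have TRRE : forall r1 r2 i j, TRR (tagnat.Rank r1 i) (tagnat.Rank r2 j) = BR r1 r2 i j.
  by move=> r1 r2 i j; rewrite /TRR mxblock_RankE.
have BR0 : forall r1 r2, nonneg (BR r1 r2).
  by move=> r1 r2 i j; rewrite -TRRE; apply: TRR0.
have bpow : forall r m i j, (BR r r ^+ m) i j <= (TRR ^+ m) (tagnat.Rank r i) (tagnat.Rank r j).
  move=> r; elim=> [|m IH] i j.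
    rewrite !expr0 !mxE; case: (eqVneq i j) => [->|ij]; first by rewrite !eqxx.
    by rewrite ler0n.
  rewrite !exprS -!mulmxE !mxE.
  apply: (le_trans (y := \sum_k TRR (tagnat.Rank r i) (tagnat.Rank r k) * (TRR ^+ m) (tagnat.Rank r k) (tagnat.Rank r j))).
    by apply: ler_sum => k _; rewrite TRRE; apply: ler_wpM2l; [exact: BR0 | exact: IH].
  rewrite [X in _ <= X]sum_Rank.
  apply: (le_sum1 (F := fun r' => \sum_(k : 'I_(NR r')) TRR (tagnat.Rank r i) (tagnat.Rank r' k) * (TRR ^+ m) (tagnat.Rank r' k) (tagnat.Rank r j)) r).
  move=> r'; apply: sumr_ge0 => k _; apply: mulr_ge0; [exact: TRR0 | exact: nonneg_exp].
have reach : forall r (k : 'I_(NR r)), exists m l,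
    0 < (TRR ^+ m) l (tagnat.Rank r k) /\ \sum_i TRR i l < 1.
  suff H : forall n (r : 'I_Rn), (r < n)%N -> forall k : 'I_(NR r), exists m l,
      0 < (TRR ^+ m) l (tagnat.Rank r k) /\ \sum_i TRR i l < 1.
    by move=> r; apply: (H r.+1).
  elim=> [//|n IH] r rn k.
  have [j0 hj0] := Bleak r.
  have [_ irr] := Birr r; have [m hm] := irr j0 k.
  have p1 : 0 < (TRR ^+ m) (tagnat.Rank r j0) (tagnat.Rank r k).
    by apply: lt_le_trans hm _; apply: bpow.
  case: (ltP (\sum_i TRR i (tagnat.Rank r j0)) 1) => [lt1|ge1].
    by exists m, (tagnat.Rank r j0).
  move: ge1; rewrite sum_Rank (bigD1 r) //=.
  under eq_bigr do rewrite TRRE.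
  under [X in _ <= _ + X]eq_bigr do under eq_bigr do rewrite TRRE.
  move=> ge1.
  have : 0 < \sum_(r1 < Rn | r1 != r) \sum_(i < NR r1) BR r1 r i j0.
    by move: hj0 ge1; lra.
  move/pos_sum_exists => [r1 r1r] /pos_sum_exists [i _ hi].
  have r1lt : (r1 < r)%N.
    case: (ltngtP r1 r) => // [rr1|/val_inj e]; last by rewrite e eqxx in r1r.
    by move: hi; rewrite Htri // mxE ltxx.
  have [m' [l' [h1 h2]]] := IH r1 (leq_trans r1lt (ltnSE rn)) i.
  exists (m' + (1 + m))%N, l'; split => //.
  apply: reach_trans h1 => //.
  apply: reach_trans p1 _ => //.
  by rewrite expr1 TRRE.
have reachall : forall j, exists m l, 0 < (TRR ^+ m) l j /\ \sum_i TRR i l < 1.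
  by move=> j; rewrite -(tagnat.sig2K j); apply: reach.
have Hleak := leak TRR0 colTRR reachall.
have zTRR : zseq (fun k => TRR ^+ k) := sub_zseq TRR0 colTRR Hleak.
have unitTRR : (1%:M - TRR) \in unitmx := sub_unit TRR0 colTRR Hleak.
split => //.
pose X := fun k => ursubmx (A ^+ k).
have X0 : X 0%N = 0.
  rewrite /X expr0; have -> : (1 : 'M[R]_(_ + _)) = 1%:M by [].
  by rewrite (scalar_mx_block _ _ 1) block_mxKur.
have Apow : forall k, A ^+ k = block_mx (TSS ^+ k) (X k) 0 (TRR ^+ k).
  elim=> [|k IH].
    rewrite X0 !expr0; have -> : (1 : 'M[R]_(_ + _)) = 1%:M by [].
    by rewrite (scalar_mx_block _ _ 1).
  have E : A ^+ k.+1 = block_mx (TSS ^+ k.+1) (TSS ^+ k *m TSR + X k *m TRR) 0 (TRR ^+ k.+1).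
    rewrite exprSr IH -mulmxE /A mulmx_block !mulmx0 !mul0mx !addr0 !add0r.
    by rewrite !exprSr -!mulmxE.
  by rewrite {1}E /X E block_mxKur.
have XD : forall a b, X (a + b)%N = TSS ^+ a *m X b + X a *m TRR ^+ b.
  move=> a b; rewrite [X (a + b)%N]/X exprD -mulmxE (Apow a) (Apow b) mulmx_block.
  by rewrite block_mxKur.
have X1 : X 1%N = TSR by rewrite /X expr1 /A block_mxKur.
have Abnd : forall k l j, `|(A ^+ k) l j| <= 1.
  move=> k l j; rewrite ger0_norm; last exact: nonneg_exp.
  rewrite -(colsum_exp1 k A0 A1 j); apply: (le_sum1 (F := fun l => (A ^+ k) l j)).
  by move=> l'; apply: nonneg_exp.
have Xbnd : bnd (R:=R) X.
  by exists 1; split => // k i j; rewrite /X !mxE; apply: Abnd.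
have ThTSS : Theta *m TSS = Theta.
  rewrite /Theta /TSS mul_mxdiag; apply: eq_mxdiag => s.
  rewrite -mulmxA; congr (_ *m _); apply/matrixP => i j; rewrite !mxE.
  under eq_bigr do rewrite mxE mul1r.
  exact: colAs.
set inv := invmx (1%:M - TRR).
have ThX : forall k, Theta *m X k = Theta *m TSR *m (\sum_(i < k) TRR ^+ i).
  elim=> [|k IH]; first by rewrite X0 big_ord0 !mulmx0.
  rewrite -add1n XD expr1 X1 mulmxDr mulmxA ThTSS IH big_ord_recr /= mulmxDr.
  by rewrite !mulmxA.
have zThX : zseq (fun k => Theta *m X k - Theta *m W).
  apply: (zseq_ext (u := fun k => - ((Theta *m TSR) *m (TRR ^+ k *m inv)))).
    move=> k; rewrite ThX /W.
    have -> : \sum_(i < k) TRR ^+ i = inv - TRR ^+ k *m inv.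
      by rewrite -(mulmxK unitTRR (\sum_(i < k) TRR ^+ i)) sumexp_mul mulmxBl mul1mx.
    by rewrite mulmxBr (mulmxA Theta TSR inv) addrAC subrr add0r.
  apply: zseqN; apply: zseq_mull; first exact: bnd_cst.
  by apply: zseq_mulr; first exact: bnd_cst.
have hhalf : forall N, exists M, forall k, (M <= k)%N -> (N <= k./2)%N.
  by move=> N; exists N.*2 => k; rewrite geq_half_double.
have hup : forall N, exists M, forall k, (M <= k)%N -> (N <= k - k./2)%N.
  move=> N; exists N.*2 => k; rewrite -geq_half_double => h.
  have := half_le k; lia.
have zX : zseq (fun k => X k - Theta *m W).
  apply: (zseq_ext (u := fun k => (TSS ^+ (k - k./2) - Theta) *m X k./2
      + (Theta *m X k./2 - Theta *m W) + X (k - k./2)%N *m TRR ^+ k./2)).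
    move=> k; have hk : k = ((k - k./2) + k./2)%N.
      by rewrite subnK //; apply: leq_trans (half_le k); apply: leq_addl.
    rewrite [in RHS]hk XD mulmxBl addrA subrK addrAC.
    by rewrite -!addrA; congr (_ + _); rewrite addrC.
  apply: zseqD; first apply: zseqD.
  - apply: zseq_mulr; first by have [K [K0 HK]] := Xbnd; exists K.
    exact: (zseq_comp hup zTSS).
  - exact: (zseq_comp hhalf zThX).
  - apply: zseq_mull; first by have [K [K0 HK]] := Xbnd; exists K.
    exact: (zseq_comp hhalf zTRR).
apply: zseq_cvg.
apply: (zseq_ext (u := fun k => block_mx (TSS ^+ k - Theta) (X k - Theta *m W) (0 - 0) (TRR ^+ k - 0))).
  by move=> k; rewrite Apow opp_block_mx add_block_mx.
apply: zseq_block => //.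
- by apply: (zseq_ext (u := fun k => 0)); [move=> k; rewrite subr0 | exact: zseq0].
- by apply: (zseq_ext (u := fun k => TRR ^+ k)) => // k; rewrite subr0.
Qed.
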